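(* Fix $\rho>0$. There exists a constant $C=C(\rho)$ such that for every positive integer $K$ and every interval $I\subset\mathbb{Z}$ of $K$ consecutive sites, with $\mathcal{M}_I=\sigma\big(\sum_{x\in I}\eta(x)\big)$, $$E_{\nu_\rho}\Big[\Big(E_{\nu_\rho}\Big(\sum_{x\in I}V_g(\eta(x))\,\Big|\,\mathcal{M}_I\Big)\Big)^2\Big]\le C.$$
   Context: $g(k)=1_{\{k\ge1\}}$ for $k\in\mathbb{N}=\{0,1,2,\dots\}$. $\nu_\rho$ is the product measure on $\mathbb{N}^{\mathbb{Z}}$ with geometric marginals $\nu_\rho(\eta(x)=k)=\frac{1}{1+\rho}\big(\frac{\rho}{1+\rho}\big)^k$, $k\ge0$ (mean $\rho$). $\phi(\rho)=E_{\nu_\rho}[g(\eta(0))]=\frac{\rho}{1+\rho}$ and $V_g(\eta(x))=g(\eta(x))-\phi(\rho)-\phi'(\rho)[\eta(x)-\rho]$. *)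

(* Defs.v *)
From Stdlib Require Import Reals Lra Lia ZArith Arith List.
Import ListNotations.
Open Scope R_scope.

Definition g (k : nat) : R := if Nat.eqb k 0 then 0 else 1.

(* geometric marginal of nu_rho: P(eta(x) = k) = 1/(1+rho) (rho/(1+rho))^k *)
Definition geom (rho : R) (k : nat) : R := / (1 + rho) * (rho / (1 + rho)) ^ k.

(* phi(rho) = E_{nu_rho}[g(eta(0))] = rho/(1+rho) *)
Definition phi (rho : R) : R := rho / (1 + rho).

Definition phi' (rho : R) : R := / (1 + rho) ^ 2.

Lemma phi_deriv_correct (rho : R) : 0 < rho -> derivable_pt_lim phi rho (phi' rho).
Proof.
  intros Hr. unfold phi, phi'.
  assert (H1 : 1 + rho <> 0) by lra.
  assert (Hp : derivable_pt_lim (plus_fct (fun _ => 1) id) rho (0 + 1)).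
  { apply derivable_pt_lim_plus. apply derivable_pt_lim_const.
    apply derivable_pt_lim_id. }
  assert (Hd := derivable_pt_lim_div id (plus_fct (fun _ => 1) id) rho 1 (0 + 1)
                 (derivable_pt_lim_id rho) Hp H1).
  unfold div_fct, plus_fct, id in Hd.
  replace (/ (1 + rho) ^ 2) with ((1 * (1 + rho) - (0 + 1) * rho) / (1 + rho)²)
    by (unfold Rsqr; field; auto).
  exact Hd.
Qed.

Definition Vg (rho : R) (k : nat) : R :=
  g k - phi rho - phi' rho * (INR k - rho).

(* All configurations (eta(x))_{x in I} on a block of K sites with total
   particle number n, listed as lists of length K (entry i = eta(a+i)). *)
Fixpoint comps (K n : nat) : list (list nat) :=
  match K with
  | O => if Nat.eqb n 0 then [[]] else []
  | S K' => flat_map (fun j => map (cons j) (comps K' (n - j))) (seq 0 (S n))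
  end.

Definition cfg_prob (rho : R) (l : list nat) : R :=
  fold_right (fun k acc => geom rho k * acc) 1 l.

Definition eta_of (a : Z) (l : list nat) (x : Z) : nat :=
  nth (Z.to_nat (x - a)) l 0%nat.

Definition sumV (rho : R) (a : Z) (K : nat) (l : list nat) : R :=
  fold_right Rplus 0
    (map (fun i : nat => Vg rho (eta_of a l (a + Z.of_nat i)%Z)) (seq 0 K)).

Definition sumR (l : list R) : R := fold_right Rplus 0 l.

Definition probS (rho : R) (K n : nat) : R :=
  sumR (map (cfg_prob rho) (comps K n)).

Definition expS (rho : R) (a : Z) (K n : nat) : R :=
  sumR (map (fun l => cfg_prob rho l * sumV rho a K l) (comps K n)).

(* E_{nu_rho}( sum_{x in I} V_g(eta(x)) | M_I ) on the event {S_I = n}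
   (elementary conditional expectation; nu_rho(S_I = n) > 0 for rho > 0) *)
Definition condExp (rho : R) (a : Z) (K n : nat) : R :=
  expS rho a K n / probS rho K n.

(* contribution of the event {S_I = n} to E[(E(. | M_I))^2] *)
Definition sqTerm (rho : R) (a : Z) (K : nat) (n : nat) : R :=
  probS rho K n * (condExp rho a K n) ^ 2.

(* Main.v *)
Require Import Defs.
From Stdlib Require Import Reals ZArith.
From Stdlib Require Import Lra Lia Arith List.
Import ListNotations.
Open Scope R_scope.


Lemma sumR_app (a b : list R) : sumR (a ++ b) = sumR a + sumR b.
Proof. induction a; simpl; [lra|rewrite IHa; lra]. Qed.

Lemma sumR_flat {A B : Type} (F : B -> R) (h : A -> list B) (s : list A) :
  sumR (map F (flat_map h s)) = sumR (map (fun j => sumR (map F (h j))) s).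
Proof. induction s; simpl; [reflexivity|]. rewrite map_app, sumR_app, IHs; reflexivity. Qed.

Lemma sumR_plus {A : Type} (F G : A -> R) (L : list A) :
  sumR (map (fun x => F x + G x) L) = sumR (map F L) + sumR (map G L).
Proof. induction L; simpl; [lra|rewrite IHL; lra]. Qed.

Lemma sumR_ext {A : Type} (F G : A -> R) (L : list A) :
  (forall x, In x L -> F x = G x) -> sumR (map F L) = sumR (map G L).
Proof. induction L; simpl; intros H; [reflexivity|]. rewrite H, IHL; auto. Qed.

Lemma sumR_scal {A : Type} (k : R) (F : A -> R) (L : list A) :
  sumR (map (fun x => k * F x) L) = k * sumR (map F L).
Proof. induction L; simpl; [lra|rewrite IHL; lra]. Qed.

Lemma sumR_nonneg {A : Type} (F : A -> R) (L : list A) :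
  (forall x, 0 <= F x) -> 0 <= sumR (map F L).
Proof. intros H; induction L; simpl; [lra|]. specialize (H a); lra. Qed.

Lemma sumR_seqS (h : nat -> R) (n : nat) :
  sumR (map h (seq 0 (S (S n)))) = h 0%nat + sumR (map (fun j => h (S j)) (seq 0 (S n))).
Proof.
  change (seq 0 (S (S n))) with (0%nat :: seq 1 (S n)).
  rewrite <- (seq_shift (S n) 0). simpl. rewrite map_map. reflexivity.
Qed.

Lemma comps_S (F : list nat -> R) K n :
  sumR (map F (comps (S K) n)) =
  sumR (map (fun j => sumR (map (fun l => F (j :: l)) (comps K (n - j)))) (seq 0 (S n))).
Proof.
  assert (E : comps (S K) n = flat_map (fun j => map (cons j) (comps K (n - j))) (seq 0 (S n))) by reflexivity.
  rewrite E, sumR_flat. apply sumR_ext. intros j _. rewrite map_map. reflexivity.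
Qed.

Fixpoint lsum (l : list nat) : nat := match l with [] => 0%nat | x :: r => (x + lsum r)%nat end.

Lemma comps_prop K : forall n l, In l (comps K n) -> length l = K /\ lsum l = n.
Proof.
  induction K; intros n l Hl.
  - simpl in Hl. destruct (Nat.eqb_spec n 0); simpl in Hl; [|contradiction].
    destruct Hl as [<-|[]]; simpl; auto.
  - change (In l (flat_map (fun j => map (cons j) (comps K (n - j))) (seq 0 (S n)))) in Hl. apply in_flat_map in Hl. destruct Hl as [j [Hj Hl]].
    apply in_map_iff in Hl. destruct Hl as [l' [<- Hl']].
    apply in_seq in Hj. destruct (IHK _ _ Hl') as [H1 H2]. simpl. split; lia.
Qed.

Definition q (rho : R) := / (1 + rho).
Definition p (rho : R) := rho / (1 + rho).

Lemma cfg_prob_eq rho l : cfg_prob rho l = q rho ^ length l * p rho ^ lsum l.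
Proof.
  induction l; simpl; [lra|]. rewrite IHl, pow_add. unfold geom, q, p. ring.
Qed.

Lemma map_nth_seq (l : list nat) : map (fun i => nth i l 0%nat) (seq 0 (length l)) = l.
Proof.
  induction l; simpl; [reflexivity|]. f_equal. rewrite <- seq_shift, map_map. exact IHl.
Qed.

Definition nz (l : list nat) : R := sumR (map g l).

Lemma sumV_eq rho a l :
  sumV rho a (length l) l =
  nz l - INR (length l) * phi rho - phi' rho * (INR (lsum l) - INR (length l) * rho).
Proof.
  unfold sumV.
  transitivity (sumR (map (Vg rho) l)).
  { rewrite <- (map_nth_seq l) at 2. rewrite map_map. unfold sumR. f_equal. apply map_ext. intros i.
    unfold eta_of. f_equal. f_equal. replace (a + Z.of_nat i - a)%Z with (Z.of_nat i) by lia.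
    apply Nat2Z.id. }
  unfold nz. induction l; simpl; [lra|]. rewrite IHl. unfold Vg.
  rewrite plus_INR. destruct (length l); [simpl; ring| rewrite S_INR; ring].
Qed.

Definition cc K n := sumR (map (fun _ => 1) (comps K n)).
Definition HH K n := sumR (map nz (comps K n)).

Lemma cc0n n : cc 0 n = if Nat.eqb n 0 then 1 else 0.
Proof. unfold cc; destruct n; simpl; lra. Qed.
Lemma HH0n n : HH 0 n = 0.
Proof. unfold HH; destruct n; simpl; unfold nz; simpl; lra. Qed.

Lemma cc_S K n : cc (S K) n = sumR (map (fun j => cc K (n - j)) (seq 0 (S n))).
Proof. unfold cc. rewrite comps_S. reflexivity. Qed.

Lemma HH_S K n : HH (S K) n = sumR (map (fun j => g j * cc K (n - j) + HH K (n - j)) (seq 0 (S n))).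
Proof.
  unfold HH. rewrite comps_S. apply sumR_ext. intros j _.
  unfold nz. simpl. rewrite (sumR_plus (fun _ => g j) (fun l => sumR (map g l))).
  f_equal. unfold cc. rewrite <- sumR_scal. apply sumR_ext; intros; ring.
Qed.

Lemma cc_SS K n : cc (S K) (S n) = cc K (S n) + cc (S K) n.
Proof. rewrite !cc_S, sumR_seqS. reflexivity. Qed.
Lemma cc_S0 K : cc (S K) 0 = cc K 0.
Proof. rewrite cc_S. simpl. lra. Qed.
Lemma cc_K0 K : cc K 0 = 1.
Proof. induction K; [rewrite cc0n; reflexivity| rewrite cc_S0; exact IHK]. Qed.

Lemma cc_nonneg K n : 0 <= cc K n.
Proof. unfold cc. apply sumR_nonneg. intros; lra. Qed.

Definition Hp K n := sumR (map (fun j => HH K (n - j)) (seq 0 (S n))).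

Lemma g0 : g 0 = 0. Proof. reflexivity. Qed.
Lemma gS j : g (S j) = 1. Proof. reflexivity. Qed.

Lemma HH_SS K n : HH (S K) (S n) = HH K (S n) + cc (S K) n + Hp K n.
Proof.
  rewrite HH_S, sumR_seqS. rewrite g0. simpl Nat.sub.
  rewrite (sumR_plus (fun j => g (S j) * cc K (n - j)) (fun j => HH K (n - j))).
  rewrite cc_S. unfold Hp.
  rewrite (sumR_ext (fun j => g (S j) * cc K (n - j)) (fun j => cc K (n - j))) by (intros; rewrite gS; ring).
  ring.
Qed.
Lemma HH_S0 K : HH (S K) 0 = HH K 0.
Proof. rewrite HH_S. simpl. rewrite g0. lra. Qed.
Lemma HH_K0 K : HH K 0 = 0.
Proof. induction K; [apply HH0n| rewrite HH_S0; exact IHK]. Qed.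
Lemma Hp_S K n : Hp K (S n) = HH K (S n) + Hp K n.
Proof. unfold Hp. rewrite sumR_seqS. reflexivity. Qed.
Lemma Hp_0 K : Hp K 0 = HH K 0.
Proof. unfold Hp. simpl. lra. Qed.

Lemma cc_ratio K : forall n, INR (S n) * cc K (S n) = (INR n + INR K) * cc K n.
Proof.
  induction K; intros n.
  - rewrite !cc0n. destruct n; simpl; lra.
  - assert (Q : forall m, INR K * cc (S K) m = (INR m + INR K) * cc K m).
    { induction m.
      - rewrite cc_S0. simpl; lra.
      - rewrite cc_SS. rewrite Rmult_plus_distr_l, IHm, <- IHK. rewrite !S_INR. ring. }
    rewrite cc_SS. rewrite Rmult_plus_distr_l, IHK.
    rewrite <- Q. rewrite !S_INR. ring.
Qed.

Lemma HH_formula K : forall n, HH K (S n) = INR K * cc K n.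
Proof.
  induction K; intros n.
  - rewrite HH0n. simpl; lra.
  - assert (Hq : forall m, Hp K (S m) = INR K * cc (S K) m).
    { induction m.
      - rewrite Hp_S, Hp_0, HH_K0, IHK, cc_S0. lra.
      - rewrite Hp_S, IHm, IHK, cc_SS. ring. }
    rewrite HH_SS. specialize (Hq n). rewrite Hp_S in Hq. rewrite S_INR. lra.
Qed.

Lemma probS_eq rho K n : probS rho K n = q rho ^ K * p rho ^ n * cc K n.
Proof.
  unfold probS, cc. rewrite <- sumR_scal. apply sumR_ext. intros l Hl.
  destruct (comps_prop _ _ _ Hl) as [H1 H2]. rewrite cfg_prob_eq, H1, H2. ring.
Qed.

Definition WW rho K n := INR K * phi rho + phi' rho * (INR n - INR K * rho).

Lemma expS_eq rho a K n : expS rho a K n = q rho ^ K * p rho ^ n * (HH K n - cc K n * WW rho K n).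
Proof.
  unfold expS, HH, cc.
  transitivity (sumR (map (fun l => q rho ^ K * p rho ^ n * (nz l + (- WW rho K n) * 1)) (comps K n))).
  { apply sumR_ext. intros l Hl.
    destruct (comps_prop _ _ _ Hl) as [H1 H2]. rewrite cfg_prob_eq.
    replace (sumV rho a K l) with (sumV rho a (length l) l) by (rewrite H1; reflexivity).
    rewrite sumV_eq, H1, H2. unfold WW. ring. }
  rewrite sumR_scal, sumR_plus, sumR_scal. ring.
Qed.

Lemma mass_id rho K : forall M,
  (1 - p rho) * sum_f_R0 (fun n => p rho ^ n * cc (S K) n) M + p rho ^ (S M) * cc (S K) M
  = sum_f_R0 (fun n => p rho ^ n * cc K n) M.
Proof.
  induction M.
  - simpl. rewrite cc_S0. ring.
  - rewrite !tech5. rewrite cc_SS.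
    assert (E : (1 - p rho) * (sum_f_R0 (fun n => p rho ^ n * cc (S K) n) M + p rho ^ S M * (cc K (S M) + cc (S K) M)) +
      p rho ^ S (S M) * (cc K (S M) + cc (S K) M) =
      ((1 - p rho) * sum_f_R0 (fun n => p rho ^ n * cc (S K) n) M + p rho ^ S M * cc (S K) M) + p rho ^ S M * cc K (S M)) by (simpl; ring).
    rewrite E, IHM. reflexivity.
Qed.

Lemma mass_bound rho (Hr : 0 < rho) K : forall M,
  sum_f_R0 (fun n => p rho ^ n * cc K n) M <= (1 + rho) ^ K.
Proof.
  assert (Hp0 : 0 <= p rho) by (unfold p; apply Rle_mult_inv_pos; lra).
  assert (E1 : 1 - p rho = / (1 + rho)) by (unfold p; field; lra).
  induction K; intros M.
  - induction M.
    + simpl. rewrite cc0n. simpl. lra.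
    + rewrite tech5, cc0n. simpl Nat.eqb. cbv iota. simpl pow. simpl pow in IHM. lra.
  - pose proof (mass_id rho K M) as E. rewrite E1 in E.
    assert (0 <= p rho ^ S M * cc (S K) M) by (apply Rmult_le_pos; [apply pow_le; lra| apply cc_nonneg]).
    specialize (IHK M).
    assert (Ht : / (1 + rho) * sum_f_R0 (fun n => p rho ^ n * cc (S K) n) M <= (1 + rho) ^ K) by lra.
    simpl pow.
    apply Rmult_le_compat_l with (r := 1 + rho) in Ht; [|lra].
    rewrite <- Rmult_assoc, Rinv_r, Rmult_1_l in Ht by lra. exact Ht.
Qed.

Definition aa rho K n := q rho ^ K * p rho ^ n * cc K n.

Lemma aa_ratio rho K n : INR (S n) * aa rho K (S n) = p rho * (INR n + INR K) * aa rho K n.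
Proof.
  unfold aa. simpl pow at 2.
  replace (INR (S n) * (q rho ^ K * (p rho * p rho ^ n) * cc K (S n))) with
    (q rho ^ K * p rho * p rho ^ n * (INR (S n) * cc K (S n))) by ring.
  rewrite cc_ratio. ring.
Qed.

Lemma stein rho K (f : nat -> R) : forall N,
  sum_f_R0 (fun n => aa rho K n * (INR n * f n - p rho * (INR n + INR K) * f (S n))) N
  = - (INR (S N) * aa rho K (S N) * f (S N)).
Proof.
  induction N.
  - simpl sum_f_R0. pose proof (aa_ratio rho K 0) as E. simpl INR in *. 
    replace (1 * aa rho K 1 * f 1%nat) with ((1 * aa rho K 1) * f 1%nat) by ring.
    rewrite E. ring.
  - rewrite tech5, IHN. pose proof (aa_ratio rho K (S N)) as E.
    replace (INR (S (S N)) * aa rho K (S (S N)) * f (S (S N))) with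
      ((INR (S (S N)) * aa rho K (S (S N))) * f (S (S N))) by ring.
    rewrite E. ring.
Qed.

Definition uu rho K n := INR n - INR K * rho.
Definition FF rho K (u : R) :=
  let t := 1 + rho in
  let a := 3 * rho in
  let b := rho * (3 + 6 * rho) + 3 * rho * INR K * t in
  let e := rho * (1 + a + b) + rho * INR K * t * (3 + 6 * rho) in
  u ^ 3 + a * u ^ 2 + b * u + e.
Definition c0 rho K :=
  let t := 1 + rho in rho * INR K * t * (1 + 6 * rho + 6 * rho ^ 2) + 3 * rho ^ 2 * t ^ 2 * INR K ^ 2.

Lemma L_id rho K n (Hr : 0 < rho) :
  (1 + rho) * (INR n * FF rho K (uu rho K n) - p rho * (INR n + INR K) * FF rho K (uu rho K (S n)))
  = uu rho K n ^ 4 - c0 rho K.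
Proof.
  unfold FF, c0, uu, p. rewrite S_INR. field. lra.
Qed.

Lemma moment4 rho K (Hr : 0 < rho) M :
  0 <= FF rho K (uu rho K (S M)) ->
  sum_f_R0 (fun n => aa rho K n * uu rho K n ^ 4) M
  <= c0 rho K * sum_f_R0 (fun n => aa rho K n) M.
Proof.
  intros Hf.
  pose proof (stein rho K (fun n => FF rho K (uu rho K n)) M) as HS. cbv beta in HS.
  assert (E : sum_f_R0 (fun n => aa rho K n * uu rho K n ^ 4) M =
     (1 + rho) * sum_f_R0 (fun n => aa rho K n *
        (INR n * FF rho K (uu rho K n) - p rho * (INR n + INR K) * FF rho K (uu rho K (S n)))) M
     + c0 rho K * sum_f_R0 (fun n => aa rho K n) M).
  { rewrite scal_sum, scal_sum, <- plus_sum. apply sum_eq. intros i _.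
    pose proof (L_id rho K i Hr) as Li. nra. }
  rewrite E, HS.
  assert (0 <= INR (S M) * aa rho K (S M) * FF rho K (uu rho K (S M))).
  { apply Rmult_le_pos; [apply Rmult_le_pos|exact Hf]. apply pos_INR.
    unfold aa. apply Rmult_le_pos; [apply Rmult_le_pos|apply cc_nonneg]; apply pow_le;
    unfold q, p; [apply Rlt_le, Rinv_0_lt_compat; lra| apply Rle_mult_inv_pos; lra]. }
  set (Y := INR (S M) * aa rho K (S M) * FF rho K (uu rho K (S M))) in *.
  assert (0 <= (1 + rho) * Y) by (apply Rmult_le_pos; lra). lra.
Qed.

Lemma aa_mass rho (Hr : 0 < rho) K M : sum_f_R0 (fun n => aa rho K n) M <= 1.
Proof.
  unfold aa.
  replace (sum_f_R0 (fun n => q rho ^ K * p rho ^ n * cc K n) M) with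
    (q rho ^ K * sum_f_R0 (fun n => p rho ^ n * cc K n) M).
  2:{ rewrite scal_sum. apply sum_eq. intros; ring. }
  pose proof (mass_bound rho Hr K M).
  assert (E : q rho ^ K * (1 + rho) ^ K = 1).
  { rewrite <- Rpow_mult_distr. unfold q. rewrite Rinv_l by lra. apply pow1. }
  assert (0 <= q rho ^ K) by (apply pow_le; unfold q; apply Rlt_le, Rinv_0_lt_compat; lra).
  rewrite <- E. apply Rmult_le_compat_l; auto.
Qed.

Lemma cc_pos K n : (1 <= K)%nat -> 0 < cc K n.
Proof.
  intros HK. induction n.
  - rewrite cc_K0; lra.
  - pose proof (cc_ratio K n) as E. rewrite S_INR in E.
    assert (1 <= INR K) by (apply (le_INR 1); exact HK).
    pose proof (pos_INR n).
    assert (0 < (INR n + INR K) * cc K n) by (apply Rmult_lt_0_compat; lra).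
    nra.
Qed.

Lemma aa_nonneg rho K n : 0 < rho -> 0 <= aa rho K n.
Proof.
  intros Hr. unfold aa. apply Rmult_le_pos; [apply Rmult_le_pos|apply cc_nonneg]; apply pow_le;
    unfold q, p; [apply Rlt_le, Rinv_0_lt_compat; lra| apply Rle_mult_inv_pos; lra].
Qed.

Lemma sqTerm_eq rho a K n : 0 < rho -> (1 <= K)%nat ->
  sqTerm rho a K n = aa rho K n * ((HH K n - cc K n * WW rho K n) / cc K n) ^ 2.
Proof.
  intros Hr HK. unfold sqTerm, condExp. rewrite probS_eq, expS_eq. unfold aa.
  pose proof (cc_pos K n HK).
  assert (0 < q rho ^ K) by (apply pow_lt; unfold q; apply Rinv_0_lt_compat; lra).
  assert (0 < p rho ^ n) by (apply pow_lt; unfold p; apply Rdiv_lt_0_compat; lra).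
  f_equal. f_equal. field. repeat split; lra.
Qed.

Lemma X_bound rho K n : 0 < rho -> (1 <= K)%nat ->
  ((HH K n - cc K n * WW rho K n) / cc K n) ^ 2 * ((1 + rho) ^ 4 * INR K ^ 2)
  <= 3 * (INR K ^ 2 * rho ^ 2 * (1 + rho) ^ 2 + INR K ^ 2 + 2 * uu rho K n ^ 4).
Proof.
  intros Hr HK.
  assert (HK1 : 1 <= INR K) by (apply (le_INR 1); exact HK).
  destruct n as [|m].
  - rewrite HH_K0, cc_K0. unfold WW, uu, phi, phi'. simpl INR.
    replace ((0 - 1 * (INR K * (rho / (1 + rho)) + / (1 + rho) ^ 2 * (0 - INR K * rho))) / 1)
      with (- (INR K * rho ^ 2 / (1 + rho) ^ 2)) by (field; lra).
    replace ((- (INR K * rho ^ 2 / (1 + rho) ^ 2)) ^ 2 * ((1 + rho) ^ 4 * INR K ^ 2))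
      with (INR K ^ 4 * rho ^ 4) by (field; lra).
    assert (0 <= INR K ^ 2 * rho ^ 2 * (1 + rho) ^ 2) by (apply Rmult_le_pos; [apply Rmult_le_pos|]; apply pow_le; lra).
    replace ((0 - INR K * rho) ^ 4) with (INR K ^ 4 * rho ^ 4) by ring.
    assert (0 <= INR K ^ 4 * rho ^ 4) by (apply Rmult_le_pos; apply pow_le; lra).
    pose proof (pow2_ge_0 (INR K)). lra.
  - rewrite HH_formula.
    pose proof (cc_pos K m HK) as Hc.
    pose proof (cc_ratio K m) as E.
    pose proof (pos_INR m) as Hm.
    assert (Ec : cc K (S m) = (INR m + INR K) * cc K m / INR (S m)).
    { rewrite <- E. field. rewrite S_INR; lra. }
    set (t := 1 + rho).
    set (u := uu rho K (S m)).
    set (D := INR m + INR K).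
    assert (HX : (INR K * cc K m - cc K (S m) * WW rho K (S m)) / cc K (S m) * t ^ 2 * D
                 = INR K * rho * t + u - u ^ 2).
    { rewrite Ec. unfold u, uu, WW, phi, phi', t, D. rewrite S_INR. field. repeat split; lra. }
    set (X := (INR K * cc K m - cc K (S m) * WW rho K (S m)) / cc K (S m)) in *.
    assert (HD : INR K <= D) by (unfold D; lra).
    assert (Ht : 0 < t) by (unfold t; lra).
    assert (H1 : X ^ 2 * (t ^ 4 * INR K ^ 2) <= X ^ 2 * (t ^ 4 * D ^ 2)).
    { apply Rmult_le_compat_l; [apply pow2_ge_0|]. apply Rmult_le_compat_l; [apply pow_le; lra|]. nra. }
    assert (H2 : X ^ 2 * (t ^ 4 * D ^ 2) = (INR K * rho * t + u - u ^ 2) ^ 2) by (rewrite <- HX; ring).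
    assert (H3 : (INR K * rho * t + u - u ^ 2) ^ 2 <= 3 * ((INR K * rho * t) ^ 2 + u ^ 2 + u ^ 4)).
    { set (x := INR K * rho * t).
      pose proof (pow2_ge_0 (x - u)). pose proof (pow2_ge_0 (u + u ^ 2)). pose proof (pow2_ge_0 (x + u ^ 2)).
      replace (u ^ 4) with ((u ^ 2) ^ 2) by ring. nra. }
    assert (H4 : u ^ 2 <= INR K ^ 2 + u ^ 4).
    { pose proof (pow2_ge_0 (u ^ 2 - 1)). assert (1 <= INR K ^ 2) by nra.
      replace (u ^ 4) with ((u ^ 2) ^ 2) by ring. nra. }
    replace ((1 + rho)) with t by reflexivity.
    nra.
Qed.

Lemma sum_mono (f : nat -> R) (Hf : forall n, 0 <= f n) N : forall k, sum_f_R0 f N <= sum_f_R0 f (N + k).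
Proof.
  induction k. - rewrite Nat.add_0_r; lra.
  - rewrite Nat.add_succ_r, tech5. specialize (Hf (S (N + k))). lra.
Qed.

Lemma FF_nonneg rho K u : 0 < rho -> 0 <= u -> 0 <= FF rho K u.
Proof.
  intros Hr Hu. unfold FF. pose proof (pos_INR K).
  assert (0 <= rho * INR K) by nra.
  assert (0 <= rho * INR K * (1 + rho)) by nra.
  assert (0 <= u ^ 2) by nra. assert (0 <= u ^ 3) by (apply pow_le; lra).
  assert (0 <= rho * (3 + 6 * rho) + 3 * rho * INR K * (1 + rho)) by nra.
  assert (0 <= rho * (1 + 3 * rho + (rho * (3 + 6 * rho) + 3 * rho * INR K * (1 + rho))) +
     rho * INR K * (1 + rho) * (3 + 6 * rho)) by nra.
  nra.
Qed.

Theorem mainTheorem12 (rho : R) (Hrho : 0 < rho) :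
  exists C : R,
    forall (K : nat) (a : Z), (1 <= K)%nat ->
      forall N : nat, sum_f_R0 (sqTerm rho a K) N <= C.
Proof.
  set (t := 1 + rho).
  set (c1 := rho * t * (1 + 6 * rho + 6 * rho ^ 2) + 3 * rho ^ 2 * t ^ 2).
  exists (3 / t ^ 4 * (rho ^ 2 * t ^ 2 + 1 + 2 * c1)).
  intros K a HK N.
  assert (Ht : 0 < t) by (unfold t; lra).
  assert (HK1 : 1 <= INR K) by (apply (le_INR 1); exact HK).
  destruct (archimed rho) as [Hup _].
  set (k0 := Z.to_nat (up rho)).
  assert (Hk0 : rho <= INR k0).
  { unfold k0. rewrite INR_IZR_INZ, Z2Nat.id; [lra|].
    apply le_IZR. lra. }
  set (M := (N + K * k0)%nat).
  assert (Hsq : forall n, 0 <= sqTerm rho a K n).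
  { intros n. rewrite sqTerm_eq by auto. apply Rmult_le_pos; [apply aa_nonneg; auto| apply pow2_ge_0]. }
  eapply Rle_trans; [apply (sum_mono _ Hsq N (K * k0))|]. fold M.
  set (B := fun n => 3 / (t ^ 4 * INR K ^ 2) * aa rho K n *
     (INR K ^ 2 * rho ^ 2 * t ^ 2 + INR K ^ 2 + 2 * uu rho K n ^ 4)).
  assert (HKp : 0 < t ^ 4 * INR K ^ 2) by (apply Rmult_lt_0_compat; [apply pow_lt; lra| nra]).
  assert (Hb : sum_f_R0 (sqTerm rho a K) M <= sum_f_R0 B M).
  { apply sum_Rle. intros n _. rewrite sqTerm_eq by auto. unfold B.
    pose proof (X_bound rho K n Hrho HK) as Xb. fold t in Xb.
    pose proof (aa_nonneg rho K n Hrho).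
    set (X2 := ((HH K n - cc K n * WW rho K n) / cc K n) ^ 2) in *.
    apply Rmult_le_compat_l with (r := aa rho K n) in Xb; auto.
    apply Rmult_le_reg_r with (r := t ^ 4 * INR K ^ 2); auto.
    replace (3 / (t ^ 4 * INR K ^ 2) * aa rho K n *
      (INR K ^ 2 * rho ^ 2 * t ^ 2 + INR K ^ 2 + 2 * uu rho K n ^ 4) * (t ^ 4 * INR K ^ 2))
      with (aa rho K n * (3 * (INR K ^ 2 * rho ^ 2 * t ^ 2 + INR K ^ 2 + 2 * uu rho K n ^ 4)))
      by (field; lra).
    lra. }
  eapply Rle_trans; [exact Hb|].
  assert (EB : sum_f_R0 B M = 3 / (t ^ 4 * INR K ^ 2) *
     ((INR K ^ 2 * rho ^ 2 * t ^ 2 + INR K ^ 2) * sum_f_R0 (fun n => aa rho K n) M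
      + 2 * sum_f_R0 (fun n => aa rho K n * uu rho K n ^ 4) M)).
  { rewrite !scal_sum, <- plus_sum, scal_sum. apply sum_eq. intros i _. unfold B. ring. }
  rewrite EB.
  assert (Hf : 0 <= FF rho K (uu rho K (S M))).
  { apply FF_nonneg; auto. unfold uu. unfold M.
    assert (INR K * rho <= INR K * INR k0) by (apply Rmult_le_compat_l; [apply pos_INR| auto]).
    assert (INR (K * k0) <= INR (S (N + K * k0))) by (apply le_INR; lia). rewrite mult_INR in *. lra. }
  pose proof (moment4 rho K Hrho M Hf) as Hm.
  pose proof (aa_mass rho Hrho K M) as Hmass.
  assert (Hs0 : 0 <= sum_f_R0 (fun n => aa rho K n) M).
  { apply cond_pos_sum. intros; apply aa_nonneg; auto. }
  assert (Hc0 : c0 rho K <= INR K ^ 2 * c1).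
  { unfold c0, c1. fold t. assert (INR K <= INR K ^ 2) by nra.
    assert (0 <= rho * t * (1 + 6 * rho + 6 * rho ^ 2)) by (apply Rmult_le_pos; nra).
    nra. }
  assert (Hc0p : 0 <= c0 rho K).
  { unfold c0. fold t. pose proof (pos_INR K). 
    assert (0 <= rho * INR K * t * (1 + 6 * rho + 6 * rho ^ 2)) by (apply Rmult_le_pos; [apply Rmult_le_pos|]; nra).
    assert (0 <= 3 * rho ^ 2 * t ^ 2 * INR K ^ 2) by (apply Rmult_le_pos; [apply Rmult_le_pos|]; nra).
    lra. }
  assert (Hin : (INR K ^ 2 * rho ^ 2 * t ^ 2 + INR K ^ 2) * sum_f_R0 (fun n => aa rho K n) M
      + 2 * sum_f_R0 (fun n => aa rho K n * uu rho K n ^ 4) M <= INR K ^ 2 * (rho ^ 2 * t ^ 2 + 1 + 2 * c1)).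
  { assert (0 <= INR K ^ 2 * rho ^ 2 * t ^ 2 + INR K ^ 2) by nra.
    assert (c0 rho K * sum_f_R0 (fun n => aa rho K n) M <= c0 rho K) by nra.
    nra. }
  apply Rmult_le_compat_l with (r := 3 / (t ^ 4 * INR K ^ 2)) in Hin.
  2: { apply Rlt_le, Rdiv_lt_0_compat; lra. }
  eapply Rle_trans; [exact Hin|]. right. field. split; lra.
Qed.
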